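(* Let $f_{\operatorname{base}}$ be a baseline model. Suppose that the function class $\mathcal{F}$ is convex with $\tau^{(s)}\in\mathcal{F}$ for all $s\in\{1,\ldots,S\}$, and that $\mathcal{H}$ is a convex subset of $\Delta_{S-1}$. Let \[ f^*_{\operatorname{rel}}(\cdot;f_{\operatorname{base}})=\underset{f\in\mathcal{F}}{\arg\min}\ \max_{Q\in\mathcal{C}(Q_{\boldsymbol{X}},\mathcal{H})}\ \mathbb{E}_Q\Big[(Y(1)-Y(0)-f(\boldsymbol{X}))^2-(Y(1)-Y(0)-f_{\operatorname{base}}(\boldsymbol{X}))^2\Big]. \] Then \[ f^*_{\operatorname{rel}}(\cdot;f_{\operatorname{base}})=\sum_{s=1}^S q_s^*\,\tau^{(s)}(\cdot)\quad\text{with}\quad \boldsymbol{q}^*=\underset{\boldsymbol{q}\in\mathcal{H}}{\arg\min}\ \mathbb{E}_{Q_{\boldsymbol{X}}}\Big[\sum_{s=1}^S q_s\tau^{(s)}(\boldsymbol{X})-f_{\operatorname{base}}(\boldsymbol{X})\Big]^2. \]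
   Context: Setting: there are $S$ source sites; site $s$ has a joint distribution $P^{(s)}$ of potential outcomes $(Y(1),Y(0))$ (real-valued) and covariates $\boldsymbol{X}\in\mathcal{X}$, with site-specific conditional average treatment effect (CATE) $\tau^{(s)}(\boldsymbol{x})=\mathbb{E}_{P^{(s)}}[Y(1)-Y(0)\mid \boldsymbol{X}=\boldsymbol{x}]$. $Q_{\boldsymbol{X}}$ is a target covariate distribution on $\mathcal{X}$. For a joint distribution $Q$ of $(Y(1),Y(0),\boldsymbol{X})$, $\tau_Q(\boldsymbol{x})=\mathbb{E}_Q[Y(1)-Y(0)\mid\boldsymbol{X}=\boldsymbol{x}]$. $\Delta_{S-1}=\{\boldsymbol{q}\in\mathbb{R}^S:\sum_s q_s=1,\ \min_s q_s\ge 0\}$. For $\mathcal{H}\subseteq\Delta_{S-1}$, the uncertainty set is $\mathcal{C}(Q_{\boldsymbol{X}},\mathcal{H})=\{Q=(Q_{\boldsymbol{X}},Q_{(Y(1),Y(0))\mid\boldsymbol{X}}):\ \tau_Q(\cdot)=\sum_{s=1}^S q_s\tau^{(s)}(\cdot)\text{ for some }\boldsymbol{q}\in\mathcal{H}\}$. *)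

(* Defs.v *)
From HB Require Import structures.
From mathcomp Require Import all_boot all_order all_algebra.
From mathcomp Require Import all_classical all_reals all_analysis.
Set Implicit Arguments. Unset Strict Implicit. Unset Printing Implicit Defensive.
Import Order.TTheory GRing.Theory Num.Theory.
Local Open Scope classical_set_scope.
Local Open Scope ring_scope.

Section Defs.
Context {R : realType} {d : measure_display} {X : measurableType d}.

Definition simplex (S : nat) : set ('I_S -> R) :=
  [set q | (forall s, 0 <= q s) /\ \sum_(s < S) q s = 1].

Definition convex_fun_set {I : Type} (A : set (I -> R)) : Prop :=
  forall f g, A f -> A g -> forall t : R, 0 <= t <= 1 ->
    A (fun i => t * f i + (1 - t) * g i).

Definition mix (S : nat) (tau : 'I_S -> X -> R) (q : 'I_S -> R) : X -> R :=
  fun x => \sum_(s < S) q s * tau s x.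

(* A point z = ((Y(1), Y(0)), X) of the joint space; ite z = Y(1) - Y(0). *)
Definition ite (z : (R * R) * X) : R := z.1.1 - z.1.2.

(* tau_Q = g (Q_X-a.e.), i.e. g is a version of E_Q[Y(1)-Y(0) | X]:
   Y(1)-Y(0) is Q-integrable and for every measurable A,
   E_Q[(Y(1)-Y(0)) 1{X in A}] = E_{Q_X}[g(X) 1{X in A}]. *)
Definition has_cate (QX : probability X R) (Q : probability ((R * R) * X)%type R)
  (g : X -> R) : Prop :=
  Q.-integrable setT (fun z => (ite z)%:E) /\
  QX.-integrable setT (fun x => (g x)%:E) /\
  forall A : set X, measurable A ->
    (\int[Q]_(z in snd @^-1` A) (ite z)%:E = \int[QX]_(x in A) (g x)%:E)%E.

Definition uncertainty_set (QX : probability X R) (S : nat)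
  (tau : 'I_S -> X -> R) (H : set ('I_S -> R)) : set (probability ((R * R) * X)%type R) :=
  fun Q : probability ((R * R) * X)%type R =>
          ((forall A : set X, measurable A -> Q (snd @^-1` A) = QX A)
        /\ Q.-integrable setT (fun z => ((ite z) ^+ 2)%:E)
        /\ exists2 q, H q & has_cate QX Q (mix tau q)).

Definition rel_risk (Q : probability ((R * R) * X)%type R) (f fbase : X -> R) : \bar R :=
  (\int[Q]_z (((ite z - f z.2) ^+ 2 - (ite z - fbase z.2) ^+ 2)%:E))%E.

Definition worst_rel_risk (C : set (probability ((R * R) * X)%type R)) (f fbase : X -> R)
  : \bar R := ereal_sup [set rel_risk Q f fbase | Q in C].

End Defs.

(* Main.v *)
Require Import Defs.
From HB Require Import structures.
From mathcomp Require Import all_boot all_order all_algebra.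
From mathcomp Require Import all_classical all_reals all_analysis.
From mathcomp Require Import measurable_realfun.
From mathcomp Require Import ring lra.
Import Order.TTheory GRing.Theory Num.Theory.
Import numFieldNormedType.Exports.
Set Implicit Arguments. Unset Strict Implicit. Unset Printing Implicit Defensive.
Local Open Scope classical_set_scope.
Local Open Scope ring_scope.

Section L2.
Context d (T : measurableType d) (R : realType) (mu : {measure set T -> \bar R}).

Definition L2 (u : T -> R) := measurable_fun setT u /\
  mu.-integrable setT (fun x => (u x ^+ 2)%:E).

Lemma L2_int_mul u v : L2 u -> L2 v ->
  mu.-integrable setT (fun x => (u x * v x)%:E).
Proof.
move=> [mu_ iu] [mv iv].
apply: (@le_integrable _ _ _ mu setT measurableT _ (fun x => (u x ^+ 2)%:E + (v x ^+ 2)%:E)%E).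
- by apply/measurable_EFinP; exact: measurable_funM.
- move=> x _; rewrite -EFinD !abse_EFin lee_fin.
  rewrite normrM [X in _ <= X]ger0_norm ?addr_ge0 ?sqr_ge0 //.
  rewrite -[u x ^+ 2](real_normK (num_real (u x))) -[v x ^+ 2](real_normK (num_real (v x))).
  have h1 := normr_ge0 (u x); have h2 := normr_ge0 (v x).
  have := sqr_ge0 (`|u x| - `|v x|); move=> h; nra.
- exact: integrableD.
Qed.

Lemma L2D u v : L2 u -> L2 v -> L2 (fun x => u x + v x).
Proof.
move=> hu hv; have := L2_int_mul hu hv; case: hu hv => [mu_ iu] [mv iv] iuv.
split; first exact: measurable_funD.
have e : (fun x => ((u x + v x) ^+ 2)%:E) = 
  (fun x => ((u x ^+ 2)%:E + (2%:E * (u x * v x)%:E)) + (v x ^+ 2)%:E)%E.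
  by apply/funext => x; rewrite -!EFinM -!EFinD; congr EFin; ring.
rewrite e; apply: integrableD => //; apply: integrableD => //.
exact: integrableZl.
Qed.

Lemma L2Z (c : R) u : L2 u -> L2 (fun x => c * u x).
Proof.
case=> mu_ iu; split; first exact: measurable_funM.
have e : (fun x => ((c * u x) ^+ 2)%:E) = (fun x => (c ^+ 2)%:E * (u x ^+ 2)%:E)%E.
  by apply/funext => x; rewrite -EFinM; congr EFin; ring.
by rewrite e; apply: integrableZl.
Qed.

Lemma L2B u v : L2 u -> L2 v -> L2 (fun x => u x - v x).
Proof.
move=> hu hv; have e : (fun x => u x - v x) = (fun x => u x + (-1) * v x).
  by apply/funext => x; ring.
by rewrite e; apply: L2D => //; apply: L2Z.
Qed.

Lemma L2_int_sq u : L2 u -> mu.-integrable setT (EFin \o (fun x => u x ^+ 2)).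
Proof. by case. Qed.

Lemma L2_int_mul' u v : L2 u -> L2 v ->
  mu.-integrable setT (EFin \o (fun x => u x * v x)).
Proof. exact: L2_int_mul. Qed.

Lemma J_quad u v (a b c : R) : L2 u -> L2 v ->
  \int[mu]_x (a * u x ^+ 2 + b * (u x * v x) + c * v x ^+ 2) =
  a * \int[mu]_x (u x ^+ 2) + b * \int[mu]_x (u x * v x) + c * \int[mu]_x (v x ^+ 2).
Proof.
move=> hu hv.
have iu := L2_int_sq hu; have iv := L2_int_sq hv; have iuv := L2_int_mul' hu hv.
have iZ (k : R) (f : T -> R) : mu.-integrable setT (EFin \o f) ->
    mu.-integrable setT (EFin \o (fun x => k * f x)).
  move=> h; have := integrableZl measurableT k h.
  by apply: eq_integrable measurableT _ _ _ => x _ /=; rewrite EFinM.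
rewrite RintegralD//; last exact: iZ.
  rewrite RintegralD//; try exact: iZ.
  by rewrite !(RintegralZl _ measurableT).
have := integrableD measurableT (iZ a _ iu) (iZ b _ iuv).
by apply: eq_integrable measurableT _ _ _ => x _ /=; rewrite EFinD.
Qed.

End L2.

Lemma int_indic d (T : measurableType d) (R : realType) (m : {measure set T -> \bar R}) (b : T -> R) (B : set T) :
  measurable B -> measurable_fun setT b -> m.-integrable setT (EFin \o b) ->
  m.-integrable setT (fun z => (b z * \1_B z)%:E).
Proof.
move=> mB mb ib; apply: (@le_integrable _ _ _ m setT measurableT _ (EFin \o b)) => //.
  by apply/measurable_EFinP; apply: measurable_funM => //; exact: measurable_indic.
move=> z _ /=; rewrite lee_fin normrM indicE.
by case: (z \in B); rewrite ?normr1 ?normr0 ?mulr1 ?mulr0.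
Qed.


Import HBSimple.
Section Key.
Context d1 d2 (Z : measurableType d1) (X : measurableType d2) (R : realType).
Variables (P : {measure set Z -> \bar R}) (mu : {measure set X -> \bar R}).
Variables (pi : Z -> X) (a : Z -> R) (g : X -> R).
Hypotheses (mpi : measurable_fun setT pi) (ma : measurable_fun setT a)
  (mg : measurable_fun setT g).
Hypothesis ia : P.-integrable setT (EFin \o a).
Hypothesis ig : mu.-integrable setT (EFin \o g).
Hypothesis hA : forall A, measurable A ->
  (\int[P]_(z in pi @^-1` A) (a z)%:E = \int[mu]_(x in A) (g x)%:E)%E.

Lemma patch_indic (T : Type) (A : set T) (f : T -> R) :
  (EFin \o f) \_ A = (fun z => (f z * \1_A z)%:E).
Proof.
apply/funext => z; rewrite /patch indicE.
by case: ifP => _ /=; rewrite ?mulr1 ?mulr0.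
Qed.

Lemma key_indic A : measurable A ->
  (\int[P]_z (a z * \1_A (pi z))%:E = \int[mu]_x (g x * \1_A x)%:E)%E.
Proof.
move=> mA; have := hA mA.
rewrite integral_mkcond [in X in _ = X -> _]integral_mkcond !patch_indic.
by [].
Qed.


Lemma key_sfun (phi : {sfun X >-> R}) :
  (\int[P]_z (a z * phi (pi z))%:E = \int[mu]_x (g x * phi x)%:E)%E.
Proof.
set s := finmap.enum_fset (fset_set (range phi)).
pose A i := phi @^-1` [set s`_i].
have mA i : measurable (A i) by exact: (measurable_sfunP phi (measurable_set1 _)).
have mpA i : measurable (pi @^-1` A i).
  by rewrite -[X in measurable X]setTI; exact: mpi.
have eP : (fun z => (a z * phi (pi z))%:E) =
    (fun z => \sum_(i < size s) ((s`_i)%:E * (a z * \1_(A i) (pi z))%:E))%E.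
  apply/funext => z; rewrite (fimfunEord phi (pi z)) mulr_sumr.
  under [RHS]eq_bigr do rewrite -EFinM.
  by rewrite sumEFin; congr EFin; apply: eq_bigr => i _; rewrite mulrCA.
have eM : (fun x => (g x * phi x)%:E) =
    (fun x => \sum_(i < size s) ((s`_i)%:E * (g x * \1_(A i) x)%:E))%E.
  apply/funext => z; rewrite (fimfunEord phi z) mulr_sumr.
  under [RHS]eq_bigr do rewrite -EFinM.
  by rewrite sumEFin; congr EFin; apply: eq_bigr => i _; rewrite mulrCA.
rewrite eP eM integral_sum//; last first.
  move=> i; apply: integrableZl => //.
  exact: (int_indic (mpA i) ma ia).
rewrite integral_sum//; last first.
  by move=> i; apply: integrableZl => //; exact: int_indic.
apply: eq_bigr => i _; rewrite !integralZl//; first by rewrite key_indic.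
all: try exact: (int_indic (mpA i) ma ia).
all: try exact: int_indic.
Qed.


Import HBNNSimple.

Lemma key_nonneg (h : X -> R) : measurable_fun setT h -> (forall x, 0 <= h x) ->
  P.-integrable setT (fun z => (a z * h (pi z))%:E) ->
  mu.-integrable setT (fun x => (g x * h x)%:E) ->
  (\int[P]_z (a z * h (pi z))%:E = \int[mu]_x (g x * h x)%:E)%E.
Proof.
move=> mh h0 iP iM.
have mEh : measurable_fun setT (EFin \o h) by exact/measurable_EFinP.
have h0' : forall x, setT x -> (0 <= (EFin \o h) x)%E by move=> x _; rewrite lee_fin.
pose phi := nnsfun_approx measurableT mEh.
have le n x : phi n x <= h x.
  by rewrite -lee_fin /phi nnsfun_approxE; exact: (le_approx n h0').
have ge n x : 0 <= phi n x by exact: fun_ge0.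
have cv x : (fun n => (phi n x)%:E) @ \oo --> (h x)%:E.
  exact: (cvg_nnsfun_approx measurableT mEh h0' (I : setT x)).
have nb (c : R) n x : `|c * phi n x| <= `|c * h x|.
  by rewrite !normrM ler_wpM2l// !ger0_norm// (le_trans (ge n x)).
have DP := @dominated_convergence _ _ _ P setT measurableT
  (fun n z => (a z * phi n (pi z))%:E) (fun z => (a z * h (pi z))%:E)
  (abse \o (fun z => (a z * h (pi z))%:E)).
have DM := @dominated_convergence _ _ _ mu setT measurableT
  (fun n z => (g z * phi n z)%:E) (fun z => (g z * h z)%:E)
  (abse \o (fun z => (g z * h z)%:E)).
case: DP.
- move=> n; apply/measurable_EFinP; apply: measurable_funM => //.
  exact: measurableT_comp (measurable_funPT (phi n)) mpi.
- exact: measurable_int iP.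
- apply: aeW => z _.
  have -> : (fun n => (a z * phi n (pi z))%:E) = (fun n => (a z)%:E * (phi n (pi z))%:E)%E.
    by apply/funext => n; rewrite EFinM.
  by rewrite EFinM; apply: cvgeZl => //; exact: cv.
- exact: integrable_abse.
- by apply: aeW => z n _ /=; rewrite lee_fin nb.
move=> _ _ LP.
case: DM.
- move=> n; apply/measurable_EFinP; apply: measurable_funM => //.
- exact: measurable_int iM.
- apply: aeW => z _.
  have -> : (fun n => (g z * phi n z)%:E) = (fun n => (g z)%:E * (phi n z)%:E)%E.
    by apply/funext => n; rewrite EFinM.
  by rewrite EFinM; apply: cvgeZl => //; exact: cv.
- exact: integrable_abse.
- by apply: aeW => z n _ /=; rewrite lee_fin nb.
move=> _ _ LM.
have E : (fun n => \int[P]_z (a z * phi n (pi z))%:E)%E =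
         (fun n => \int[mu]_z (g z * phi n z)%:E)%E.
  by apply/funext => n; exact: key_sfun.
move: LP; rewrite /= E => LP.
exact: (cvg_unique _ LP LM).
Qed.

Lemma key_gen (h : X -> R) : measurable_fun setT h ->
  P.-integrable setT (fun z => (a z * h (pi z))%:E) ->
  mu.-integrable setT (fun x => (g x * h x)%:E) ->
  (\int[P]_z (a z * h (pi z))%:E = \int[mu]_x (g x * h x)%:E)%E.
Proof.
move=> mh iP iM.
have hpn x : h x = h^\+ x - h^\- x.
  by rewrite -[in LHS](funrposBneg h).
have bp x : `|h^\+ x| <= `|h x|.
  by rewrite /funrpos; case: (leP (h x) 0) => hx; rewrite ?normr0.
have bn x : `|h^\- x| <= `|h x|.
  by rewrite /funrneg; case: (leP (- h x) 0) => hx; rewrite ?normr0 ?normrN.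
have intP (k : X -> R) : measurable_fun setT k -> (forall x, `|k x| <= `|h x|) ->
    P.-integrable setT (EFin \o (fun z => a z * k (pi z))).
  move=> mk bk; apply: (@le_integrable _ _ _ P setT measurableT _ _ _ _ iP).
    apply/measurable_EFinP; apply: measurable_funM => //.
    exact: measurableT_comp mk mpi.
  by move=> z _ /=; rewrite lee_fin !normrM ler_wpM2l.
have intM (k : X -> R) : measurable_fun setT k -> (forall x, `|k x| <= `|h x|) ->
    mu.-integrable setT (EFin \o (fun z => g z * k z)).
  move=> mk bk; apply: (@le_integrable _ _ _ mu setT measurableT _ _ _ _ iM).
    by apply/measurable_EFinP; apply: measurable_funM.
  by move=> z _ /=; rewrite lee_fin !normrM ler_wpM2l.
have mp := measurable_funrpos mh; have mn := measurable_funrneg mh.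
have eP : (fun z => (a z * h (pi z))%:E) =
   (fun z => (a z * h^\+ (pi z))%:E - (a z * h^\- (pi z))%:E)%E.
  by apply/funext => z; rewrite -EFinB -mulrBr -hpn.
have eM : (fun z => (g z * h z)%:E) =
   (fun z => (g z * h^\+ z)%:E - (g z * h^\- z)%:E)%E.
  by apply/funext => z; rewrite -EFinB -mulrBr -hpn.
rewrite eP eM.
rewrite (integralB_EFin measurableT (intP _ mp bp) (intP _ mn bn)).
rewrite (integralB_EFin measurableT (intM _ mp bp) (intM _ mn bn)).
rewrite key_nonneg //; [|exact: intP|exact: intM].
rewrite key_nonneg //; [exact: intP|exact: intM].
Qed.

End Key.

Section Main.
Context (R : realType) (d : measure_display) (X : measurableType d).
Notation ZT := ((R * R) * X)%type.

Lemma marg_transfer (QX : probability X R) (Q : probability ZT R)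
  (hm : forall A, measurable A -> Q (snd @^-1` A) = QX A)
  (phi : X -> R) : measurable_fun setT phi -> QX.-integrable setT (EFin \o phi) ->
  Q.-integrable setT (fun z => (phi z.2)%:E) /\
  (\int[Q]_z (phi z.2)%:E = \int[QX]_x (phi x)%:E)%E.
Proof.
move=> mphi iphi.
have msnd : measurable_fun setT (@snd (R * R)%type X) by exact: measurable_snd.
have mE : measurable_fun setT (EFin \o phi) by exact/measurable_EFinP.
have eqm (f : X -> \bar R) : (\int[pushforward Q snd]_x f x = \int[QX]_x f x)%E.
  by apply: eq_measure_integral => A mA _; exact: hm.
have iQ : Q.-integrable setT (fun z => (phi z.2)%:E).
  apply/integrableP; split.
    by apply/measurable_EFinP; exact: measurableT_comp mphi msnd.
  have := ge0_integral_pushforward msnd Q measurableT (measurableT_comp (@abse_measurable R setT) mE) (fun _ _ => abse_ge0 _).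
  rewrite eqm => <-; by case/integrableP: iphi.
split => //.
have := integral_pushforward msnd mE iQ measurableT.
by rewrite eqm => ->.
Qed.


Lemma mite : measurable_fun setT (@ite R d X).
Proof.
apply: measurable_funB.
  exact: measurableT_comp measurable_fst measurable_fst.
exact: measurableT_comp measurable_snd measurable_fst.
Qed.

Lemma rel_risk_eq (QX : probability X R) (Q : probability ZT R)
  (hm : forall A, measurable A -> Q (snd @^-1` A) = QX A)
  (iQ2 : Q.-integrable setT (fun z => ((ite z) ^+ 2)%:E))
  (g : X -> R) (hc : has_cate QX Q g) (Lg : L2 QX g) (f fb : X -> R)
  (Lf : L2 QX f) (Lfb : L2 QX fb) :
  rel_risk Q f fb = (\int[QX]_x ((g x - f x) ^+ 2 - (g x - fb x) ^+ 2))%:E.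
Proof.
case: hc => [ia [ig hA]].
have msnd : measurable_fun setT (@snd (R * R)%type X) by exact: measurable_snd.
pose k x := f x ^+ 2 - fb x ^+ 2.
pose h x := f x - fb x.
have Lh : L2 QX h by exact: L2B.
have ik : QX.-integrable setT (EFin \o k).
  have := integrableB measurableT (L2_int_sq Lf) (L2_int_sq Lfb).
  by apply: eq_integrable measurableT _ _ _ => x _ /=; rewrite EFinB.
have mk : measurable_fun setT k.
  by apply: measurable_funB; apply: measurable_funX; [case: Lf|case: Lfb].
have [ikQ ekQ] := marg_transfer hm mk ik.
have LiteQ : L2 Q (@ite R d X) by split; [exact: mite|exact: iQ2].
have LhQ : L2 Q (fun z => h z.2).
  split; first by apply: measurableT_comp msnd; case: Lh.
  have [mh ih] := Lh.
  exact: (marg_transfer hm (measurable_funX 2 mh) ih).1.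
have iaQ := L2_int_mul LiteQ LhQ.
have i2aQ : Q.-integrable setT (EFin \o (fun z => 2 * (ite z * h z.2))).
  have := integrableZl measurableT 2 iaQ.
  by apply: eq_integrable measurableT _ _ _ => x _ /=; rewrite EFinM.
have igh := L2_int_mul Lg Lh.
have i2gh : QX.-integrable setT (EFin \o (fun x => 2 * (g x * h x))).
  have := integrableZl measurableT 2 igh.
  by apply: eq_integrable measurableT _ _ _ => x _ /=; rewrite EFinM.
have key := key_gen measurable_snd mite (proj1 Lg) ia ig hA (proj1 Lh) iaQ igh.
rewrite /rel_risk.
have -> : (fun z => (((ite z - f z.2) ^+ 2 - (ite z - fb z.2) ^+ 2)%:E)) =
    (fun z => (k z.2)%:E - (2 * (ite z * h z.2))%:E)%E.
  by apply/funext => z; rewrite -EFinB /k /h; congr EFin; ring.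
rewrite (integralB_EFin measurableT ikQ i2aQ).
rewrite /Rintegral fineK; last first.
  apply: integrable_fin_num => //.
  have := integrableB measurableT ik i2gh.
  apply: eq_integrable measurableT _ _ _ => x _ /=.
  by rewrite -EFinB /k /h; congr EFin; ring.
have -> : (fun x => (((g x - f x) ^+ 2 - (g x - fb x) ^+ 2)%:E)) =
    (fun x => (k x)%:E - (2 * (g x * h x))%:E)%E.
  by apply/funext => z; rewrite -EFinB /k /h; congr EFin; ring.
rewrite (integralB_EFin measurableT ik i2gh) ekQ.
congr (_ - _)%E.
under eq_integral do rewrite EFinM.
rewrite integralZl //.
under [RHS]eq_integral do rewrite EFinM.
by rewrite integralZl // key.
Qed.

Lemma L2_int (QX : probability X R) u : L2 QX u -> QX.-integrable setT (EFin \o u).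
Proof.
case=> mu_ iu.
apply: (@le_integrable _ _ _ QX setT measurableT _ (fun x => (1 + u x ^+ 2)%:E)).
- exact/measurable_EFinP.
- move=> x _ /=; rewrite lee_fin [X in _ <= X]ger0_norm ?addr_ge0 ?sqr_ge0 //.
  rewrite -(real_normK (num_real (u x))); have := normr_ge0 (u x); nra.
- have := integrableD measurableT (finite_measure_integrable_cst QX 1 measurableT) iu.
  by apply: eq_integrable measurableT _ _ _ => x _ /=; rewrite EFinD.
Qed.

Lemma exists_Q (QX : probability X R) (g : X -> R) : L2 QX g ->
  exists Q : probability ZT R,
   [/\ (forall A, measurable A -> Q (snd @^-1` A) = QX A),
       Q.-integrable setT (fun z => ((ite z) ^+ 2)%:E) &
       has_cate QX Q g].
Proof.
move=> Lg; have [mg ig2] := Lg.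
pose phi := fun x : X => ((g x, (0:R)), x).
have mphi : measurable_fun setT phi.
  apply: measurable_fun_pair => //; apply: measurable_fun_pair => //.
pose M : {mfun X >-> ZT} := MeasurableFun.Pack (MeasurableFun.Class
   (isMeasurableFun.Build _ _ _ _ phi mphi)).
exists (distribution QX M); split.
- by move=> A mA.
- apply: (integrable_pushforward mphi) => //.
    by apply/measurable_EFinP; apply: measurable_funX; exact: mite.
  by apply: eq_integrable measurableT _ _ _ ig2 => x _ /=; rewrite /ite /= subr0.
split.
- apply: (integrable_pushforward mphi) => //.
    by apply/measurable_EFinP; exact: mite.
  by apply: eq_integrable measurableT _ _ _ (L2_int Lg) => x _ /=; rewrite /ite /= subr0.
split; first exact: L2_int.
move=> A mA.
have msA : measurable (@snd (R * R)%type X @^-1` A).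
  by rewrite -[X in measurable X]setTI; exact: measurable_snd.
rewrite (integral_pushforward mphi) //.
- by apply: eq_integral => x _; rewrite /ite /= subr0.
- by apply/measurable_EFinP; exact: mite.
- apply: integrableS measurableT _ _ _ => //.
  by apply: eq_integrable measurableT _ _ _ (L2_int Lg) => x _ /=; rewrite /ite /= subr0.
Qed.

End Main.

Lemma conv_comb (R : realType) (T : Type) (S : nat) (F : set (T -> R))
  (tau : 'I_S -> T -> R) :
  @convex_fun_set R T F -> (forall s, F (tau s)) ->
  forall n (w : 'I_S -> R), (forall i, 0 <= w i) ->
  \sum_(i < S | (i < n)%N) w i = 1 ->
  F (fun x => \sum_(i < S | (i < n)%N) w i * tau i x).
Proof.
move=> cF Ft; elim=> [|n IH] w w0 ws.
  move: ws; rewrite big_pred0 => [/eqP|i]; last by rewrite ltn0.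
  by rewrite eq_sym oner_eq0.
have [nS|nS] := ltnP n S; last first.
  have e i : ((i : 'I_S) < n.+1)%N = (i < n)%N.
    by rewrite ltnS leq_eqVlt; have := leq_trans (ltn_ord i) nS; rewrite ltn_neqAle => /andP[/negbTE -> _].
  move: ws; rewrite (eq_bigl _ _ e) => ws.
  have -> : (fun x => \sum_(i < S | (i < n.+1)%N) w i * tau i x) =
    (fun x => \sum_(i < S | (i < n)%N) w i * tau i x).
    by apply/funext => x; apply: eq_bigl => i; rewrite e.
  exact: IH.
pose j : 'I_S := Ordinal nS.
have e (i : 'I_S) : ((i < n.+1)%N && (i != j)) = (i < n)%N.
  rewrite ltnS; have -> : (i != j) = (nat_of_ord i != n) by [].
  by case: (ltngtP i n).
have sE (G : 'I_S -> R) : \sum_(i < S | (i < n.+1)%N) G i = G j + \sum_(i < S | (i < n)%N) G i.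
  by rewrite (bigD1 j) //= (eq_bigl _ _ e).
move: ws; rewrite sE => ws.
have fE : (fun x => \sum_(i < S | (i < n.+1)%N) w i * tau i x) =
          (fun x => w j * tau j x + \sum_(i < S | (i < n)%N) w i * tau i x).
  by apply/funext => x; rewrite sE.
rewrite fE.
set W := \sum_(i < S | (i < n)%N) w i.
have W0 : 0 <= W by apply: sumr_ge0 => i _.
have [W00|Wpos] := eqVneq W 0.
  have wi0 (i : 'I_S) : (i < n)%N -> w i = 0.
    move=> hi; move/eqP: W00; rewrite /W psumr_eq0 //.
    by move=> /allP /(_ i (mem_index_enum _)); rewrite hi => /eqP.
  have wj1 : w j = 1 by move: ws; rewrite -/W W00 addr0.
  have -> : (fun x => w j * tau j x + \sum_(i < S | (i < n)%N) w i * tau i x) = tau j.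
    apply/funext => x; rewrite big1 ?wj1 ?mul1r ?addr0 //.
    by move=> i hi; rewrite wi0 // mul0r.
  exact: Ft.
have Wgt : 0 < W by rewrite lt_def Wpos W0.
pose w' i := w i / W.
have IH' := IH w' (fun i => divr_ge0 (w0 i) W0).
have ws' : \sum_(i < S | (i < n)%N) w' i = 1.
  by rewrite /w' -mulr_suml -/W divff.
have W1 : W <= 1 by rewrite -ws lerDr.
have := cF _ _ (IH' ws') (Ft j) W.
rewrite W0 W1 => /(_ isT).
have -> : 1 - W = w j by rewrite -ws addrK.
suff -> : (fun x => w j * tau j x + \sum_(i < S | (i < n)%N) w i * tau i x) =
  (fun i => W * (\sum_(i0 < S | (i0 < n)%N) w' i0 * tau i0 i) + w j * tau j i) by [].
apply/funext => x.
rewrite addrC; congr (_ + _).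
rewrite mulr_sumr; apply: eq_bigr => i _.
by rewrite /w' mulrA mulrCA divff ?mulr1.
Qed.

Lemma quad_lim (R : realFieldType) (A B : R) : 0 <= A ->
  (forall t, 0 < t <= 1 -> 0 <= t ^+ 2 * A + 2 * t * B) -> 0 <= B.
Proof.
move=> A0 h; rewrite leNgt; apply/negP => B0.
have A1 : 0 < A + 1 by lra.
pose t := - B / (A + 1).
have t0 : 0 < t by rewrite /t divr_gt0 // oppr_gt0.
have tA : t * (A + 1) = - B by rewrite /t divfK // gt_eqF.
have [t1|t1] := lerP t 1.
  have := h t; rewrite t0 t1 => /(_ isT); nra.
have := h 1; rewrite ltr01 lexx => /(_ isT); nra.
Qed.

Lemma RintE d (T : measurableType d) (R : realType) (mu : {measure set T -> \bar R}) (u : T -> R) :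
  mu.-integrable setT (EFin \o u) ->
  (\int[mu]_x (u x)%:E)%E = (\int[mu]_x u x)%:E.
Proof. by move=> iu; rewrite /Rintegral fineK //; exact: integrable_fin_num. Qed.

Lemma L2_sum d (T : measurableType d) (R : realType) (mu : {measure set T -> \bar R})
  (I : Type) (r : seq I) (F : I -> T -> R) :
  (forall i, L2 mu (F i)) -> L2 mu (fun x => \sum_(i <- r) F i x).
Proof.
move=> hF; elim: r => [|i r IH].
  split; first by under eq_fun do rewrite big_nil; exact: measurable_cst.
  under eq_fun do rewrite big_nil expr2 mulr0.
  exact: integrable0.
have -> : (fun x => \sum_(j <- i :: r) F j x) = (fun x => F i x + \sum_(j <- r) F j x).
  by apply/funext => x; rewrite big_cons.
exact: L2D.
Qed.

Lemma mix_conv (R : realType) d (T : measurableType d) (S : nat) (tau : 'I_S -> T -> R) (q p : 'I_S -> R) (t : R) (x : T) :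
  mix tau (fun i => t * q i + (1 - t) * p i) x = t * mix tau q x + (1 - t) * mix tau p x.
Proof.
rewrite /mix !mulr_sumr -big_split; apply: eq_bigr => i _ /=; ring.
Qed.

Unset Implicit Arguments.

Theorem proposition2 (R : realType) (d : measure_display) (X : measurableType d)
  (S : nat) (QX : probability X R) (tau : 'I_S -> X -> R) (fbase : X -> R)
  (F : set (X -> R)) (H : set ('I_S -> R)) :
  (forall s, measurable_fun setT (tau s) /\
             QX.-integrable setT (fun x => (tau s x ^+ 2)%:E)) ->
  measurable_fun setT fbase ->
  QX.-integrable setT (fun x => (fbase x ^+ 2)%:E) ->
  (forall f, F f -> measurable_fun setT f /\
                    QX.-integrable setT (fun x => (f x ^+ 2)%:E)) ->
  convex_fun_set F -> (forall s, F (tau s)) ->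
  H `<=` @simplex R S -> convex_fun_set H ->
  forall qstar : 'I_S -> R, H qstar ->
  (forall q, H q ->
     (\int[QX]_x ((mix tau qstar x - fbase x) ^+ 2)%:E
      <= \int[QX]_x ((mix tau q x - fbase x) ^+ 2)%:E)%E) ->
  let fstar := mix tau qstar in
  let C := uncertainty_set QX tau H in
  [/\ F fstar,
      (forall f, F f -> (worst_rel_risk C fstar fbase <= worst_rel_risk C f fbase)%E) &
      (forall f, F f -> (worst_rel_risk C f fbase <= worst_rel_risk C fstar fbase)%E ->
         {ae QX, forall x, f x = fstar x})].
Proof.
move=> htau mfb ifb hF cF Ftau HS cH qstar Hq opt fstar C.
have Lfb : L2 QX fbase by [].
have Lmix q : L2 QX (mix tau q).
  have := @L2_sum _ _ _ QX _ (index_enum 'I_S) (fun i x => q i * tau i x).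
  by apply => i; apply: L2Z; exact: htau.
have Ff : F fstar.
  have [q0 q1] := HS _ Hq.
  have := conv_comb cF Ftau q0 (n := S).
  have e : forall G : 'I_S -> R, \sum_(i < S | (i < S)%N) G i = \sum_(i < S) G i.
    by move=> G; apply: eq_bigl => i; rewrite ltn_ord.
  rewrite e => /(_ q1).
  suff -> : (fun x => \sum_(i < S | (i < S)%N) qstar i * tau i x) = fstar by [].
  by apply/funext => x; rewrite e.
pose gs := fstar.
pose e x := gs x - fbase x.
have Le : L2 QX e by rewrite /e; apply: L2B => //; exact: Lmix.
pose Je2 := \int[QX]_x (e x ^+ 2).
pose E q f := \int[QX]_x ((mix tau q x - f x) ^+ 2 - (mix tau q x - fbase x) ^+ 2).
have riskE Q f : C Q -> L2 QX f -> exists2 q, H q & rel_risk Q f fbase = (E q f)%:E.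
  case=> hm [iQ2 [q Hq' hc]]; exists q => //.
  exact: rel_risk_eq.
have claimA q : H q -> E q fstar <= - Je2.
  move=> Hq'.
  pose dd x := mix tau q x - gs x.
  have Ld : L2 QX dd by rewrite /dd; apply: L2B => //; exact: Lmix.
  have -> : E q fstar = \int[QX]_x (0 * dd x ^+ 2 + (-2) * (dd x * e x) + (-1) * e x ^+ 2).
    by apply: eq_Rintegral => x _; rewrite /dd /e /gs; ring.
  rewrite (J_quad 0 (-2) (-1) Ld Le) -/Je2.
  have A0 : 0 <= \int[QX]_x (dd x ^+ 2) by apply: Rintegral_ge0 => x _; exact: sqr_ge0.
  suff : 0 <= \int[QX]_x (dd x * e x) by lra.
  apply: (quad_lim A0) => t /andP[t0 t1].
  pose qt := fun i => t * q i + (1 - t) * qstar i.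
  have Hqt : H qt by apply: cH => //; rewrite (ltW t0) t1.
  have := opt qt Hqt.
  have Lt : L2 QX (fun x => mix tau qt x - fbase x) by apply: L2B => //; exact: Lmix.
  rewrite (RintE (L2_int_sq Le)) (RintE (L2_int_sq Lt)) lee_fin -/Je2.
  have -> : \int[QX]_x ((mix tau qt x - fbase x) ^+ 2) =
     \int[QX]_x (t ^+ 2 * dd x ^+ 2 + (2 * t) * (dd x * e x) + 1 * e x ^+ 2).
    apply: eq_Rintegral => x _; rewrite /qt mix_conv /dd /e /gs /fstar; ring.
  rewrite (J_quad _ _ _ Ld Le) -/Je2; lra.
have claimB f : L2 QX f -> E qstar f = \int[QX]_x ((gs x - f x) ^+ 2) - Je2.
  move=> Lf.
  have Lu : L2 QX (fun x => gs x - f x) by apply: L2B => //; exact: Lmix.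
  have -> : E qstar f = \int[QX]_x (1 * (gs x - f x) ^+ 2 + 0 * ((gs x - f x) * e x) + (-1) * e x ^+ 2).
    by apply: eq_Rintegral => x _; rewrite /e /gs /fstar; ring.
  rewrite (J_quad 1 0 (-1) Lu Le) -/Je2; ring.
have [Qs [Qsm Qsi Qsc]] := exists_Q (Lmix qstar).
have CQs : C Qs by split => //; split => //; exists qstar.
have wstar : (worst_rel_risk C fstar fbase <= (- Je2)%:E)%E.
  apply: ub_ereal_sup => _ [Q CQ <-].
  have [q Hq' ->] := riskE Q fstar CQ (Lmix qstar).
  by rewrite lee_fin; exact: claimA.
have wlow f : F f -> ((\int[QX]_x ((gs x - f x) ^+ 2) - Je2)%:E <= worst_rel_risk C f fbase)%E.
  move=> Ff'; apply: ereal_sup_ubound; exists Qs => //.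
  rewrite -claimB; last exact: hF.
  by rewrite (rel_risk_eq Qsm Qsi Qsc (Lmix qstar) (hF f Ff') Lfb).
split => //.
- move=> f Ff'; apply: le_trans wstar _; apply: le_trans (wlow f Ff').
  rewrite lee_fin.
  have : 0 <= \int[QX]_x ((gs x - f x) ^+ 2) by apply: Rintegral_ge0 => x _; exact: sqr_ge0.
  lra.
move=> f Ff' hle.
have Lf := hF f Ff'.
have Lu : L2 QX (fun x => gs x - f x) by apply: L2B => //; exact: Lmix.
have h1 := le_trans (wlow f Ff') (le_trans hle wstar).
move: h1; rewrite lee_fin => h1.
have h0 : 0 <= \int[QX]_x ((gs x - f x) ^+ 2) by apply: Rintegral_ge0 => x _; exact: sqr_ge0.
have J0 : \int[QX]_x ((gs x - f x) ^+ 2) = 0 by lra.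
have mF : measurable_fun setT (fun x => ((gs x - f x) ^+ 2)%:E).
  by apply/measurable_EFinP; apply: measurable_funX; case: Lu.
have := (ae_eq_integral_abs QX measurableT mF).1.
have -> : (\int[QX]_x `|((gs x - f x) ^+ 2)%:E| = 0)%E.
  under eq_integral do rewrite gee0_abs ?lee_fin ?sqr_ge0 //.
  by rewrite (RintE (L2_int_sq Lu)) J0.
move=> /(_ erefl) hae.
apply: filterS hae => x /(_ I) /= /eqP.
rewrite eqe sqrf_eq0 subr_eq0 => /eqP <-.
by [].
Qed.
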